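(* Let $\mathcal{H}$ be a real Hilbert space, let $A\colon \mathcal{H}\rightrightarrows\mathcal{H}$ be maximally monotone and $m$-strongly monotone, let $B\colon \mathcal{H}\to\mathcal{H}$ be monotone and $L$-Lipschitz continuous, and suppose $(A+B)^{-1}(0)\neq\varnothing$. Let $\lambda\in\left(0,\frac{1}{2L}\right)$. Given $x_0,x_{-1}\in\mathcal{H}$, define the sequence $(x_k)$ by $$x_{k+1} = J_{\lambda A}\bigl( x_k - 2\lambda B(x_k) +\lambda B(x_{k-1}) \bigr) \quad\forall k\in\mathbb{N}.$$ Then $(A+B)^{-1}(0)$ consists of a single point and $(x_k)$ converges $R$-linearly to it.
   Context: $J_{\lambda A}:=(I+\lambda A)^{-1}$ is the resolvent. $A$ is $m$-strongly monotone if $m>0$ and $\langle x-y,u-v\rangle\geq m\|x-y\|^2$ for all $(x,u),(y,v)$ in the graph of $A$. A sequence $(x_k)$ converges $R$-linearly to $x^*$ if there exist $C\geq 0$ and $q\in(0,1)$ with $\|x_k-x^*\|\leq Cq^k$ for all $k$. *)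

(* Defs.v *)
(* A real Hilbert space is a complete normed module
   over a realType R whose norm is induced by an inner product. *)
From HB Require Import structures.
From mathcomp Require Import all_boot all_order all_algebra.
From mathcomp Require Import all_classical all_reals all_analysis.
Set Implicit Arguments. Unset Strict Implicit. Unset Printing Implicit Defensive.
Import Order.TTheory GRing.Theory Num.Theory.
Import numFieldNormedType.Exports.
Local Open Scope ring_scope.
Local Open Scope classical_set_scope.

Record is_inner_product (R : realType) (V : normedModType R)
    (ip : V -> V -> R) : Prop := {
  ip_sym : forall x y, ip x y = ip y x;
  ip_linear : forall a x y z, ip (a *: x + y) z = a * ip x z + ip y z;
  ip_norm : forall x, `|x| ^+ 2 = ip x x
}.

Definition monotone_op (R : realType) (V : normedModType R) (ip : V -> V -> R)
  (A : V -> set V) : Prop :=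
  forall x y u v, A x u -> A y v -> 0 <= ip (x - y) (u - v).

Definition maximally_monotone (R : realType) (V : normedModType R)
  (ip : V -> V -> R) (A : V -> set V) : Prop :=
  monotone_op ip A /\
  forall x u, (forall y v, A y v -> 0 <= ip (x - y) (u - v)) -> A x u.

Definition strongly_monotone (R : realType) (V : normedModType R)
  (ip : V -> V -> R) (m : R) (A : V -> set V) : Prop :=
  0 < m /\ forall x y u v, A x u -> A y v -> m * `|x - y| ^+ 2 <= ip (x - y) (u - v).

Definition monotone_fun (R : realType) (V : normedModType R)
  (ip : V -> V -> R) (B : V -> V) : Prop :=
  forall x y, 0 <= ip (x - y) (B x - B y).

Definition lipschitz_with (R : realType) (V : normedModType R) (L : R) (B : V -> V) : Prop :=
  forall x y, `|B x - B y| <= L * `|x - y|.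

Definition resolvent (R : realType) (V : normedModType R) (lam : R)
  (A : V -> set V) : V -> set V :=
  fun y => [set x | exists u, A x u /\ y = x + lam *: u].

Definition zeros_sum (R : realType) (V : normedModType R)
  (A : V -> set V) (B : V -> V) : set V :=
  [set z | A z (- B z)].

Definition R_linear_conv (R : realType) (V : normedModType R) (x : nat -> V) (z : V) : Prop :=
  exists C q : R, 0 <= C /\ 0 < q < 1 /\ forall k, `|x k - z| <= C * q ^+ k.

(* Main.v *)
Require Import Defs.
From HB Require Import structures.
From mathcomp Require Import all_boot all_order all_algebra.
From mathcomp Require Import all_classical all_reals all_analysis.
From mathcomp Require Import ring lra.
Import Order.TTheory GRing.Theory Num.Theory.
Import numFieldNormedType.Exports.
Local Open Scope ring_scope.
Local Open Scope classical_set_scope.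

Lemma ipDl {R : realType} {V : normedModType R} {ip : V -> V -> R} :
  is_inner_product ip -> forall x y z, ip (x + y) z = ip x z + ip y z.
Proof. by move=> H x y z; have := ip_linear H 1 x y z; rewrite scale1r mul1r. Qed.

Lemma ipZl {R : realType} {V : normedModType R} {ip : V -> V -> R} :
  is_inner_product ip -> forall a x z, ip (a *: x) z = a * ip x z.
Proof.
move=> H a x z; have := ip_linear H a x 0 z.
have h0 : ip 0 z = 0.
  have := ip_linear H 1 0 0 z; rewrite scale1r addr0 mul1r; lra.
by rewrite addr0 h0 addr0.
Qed.

Lemma ipNl {R : realType} {V : normedModType R} {ip : V -> V -> R} :
  is_inner_product ip -> forall x z, ip (- x) z = - ip x z.
Proof. by move=> H x z; rewrite -scaleN1r (ipZl H) mulN1r. Qed.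

Lemma ipBl {R : realType} {V : normedModType R} {ip : V -> V -> R} :
  is_inner_product ip -> forall x y z, ip (x - y) z = ip x z - ip y z.
Proof. by move=> H x y z; rewrite (ipDl H) (ipNl H). Qed.

Lemma ipDr {R : realType} {V : normedModType R} {ip : V -> V -> R} :
  is_inner_product ip -> forall x y z, ip z (x + y) = ip z x + ip z y.
Proof. by move=> H x y z; rewrite (ip_sym H) (ipDl H) !(ip_sym H _ z). Qed.

Lemma ipZr {R : realType} {V : normedModType R} {ip : V -> V -> R} :
  is_inner_product ip -> forall a x z, ip z (a *: x) = a * ip z x.
Proof. by move=> H a x z; rewrite (ip_sym H) (ipZl H) (ip_sym H x). Qed.

Lemma ipNr {R : realType} {V : normedModType R} {ip : V -> V -> R} :
  is_inner_product ip -> forall x z, ip z (- x) = - ip z x.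
Proof. by move=> H x z; rewrite (ip_sym H) (ipNl H) (ip_sym H x). Qed.

Lemma ipBr {R : realType} {V : normedModType R} {ip : V -> V -> R} :
  is_inner_product ip -> forall x y z, ip z (x - y) = ip z x - ip z y.
Proof. by move=> H x y z; rewrite (ipDr H) (ipNr H). Qed.

Lemma cross_bound (R : realType) (V : normedModType R) (ip : V -> V -> R)
  (L : R) (x x' y : V) :
  is_inner_product ip -> 0 < L -> `|y| <= L * `|x'| ->
  - (L * (`|x| ^+ 2 + `|x'| ^+ 2)) <= 2 * ip x y <=
    L * (`|x| ^+ 2 + `|x'| ^+ 2).
Proof.
move=> H L0 hy.
have hy2 : `|y| ^+ 2 <= L ^+ 2 * `|x'| ^+ 2.
  have hx0 : 0 <= L * `|x'| by apply: mulr_ge0 => //; lra.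
  by rewrite -exprMn ler_pXn2r // nnegrE.
have e1 : `|L *: x + y| ^+ 2 = L ^+ 2 * `|x| ^+ 2 + 2 * L * ip x y + `|y| ^+ 2.
  rewrite !(ip_norm H) (ipDl H) !(ipDr H) !(ipZl H) !(ipZr H) (ip_sym H y x); ring.
have e2 : `|L *: x - y| ^+ 2 = L ^+ 2 * `|x| ^+ 2 - 2 * L * ip x y + `|y| ^+ 2.
  rewrite !(ip_norm H) (ipBl H) !(ipBr H) !(ipZl H) !(ipZr H) (ip_sym H y x); ring.
have p1 := sqr_ge0 `|L *: x + y|. have p2 := sqr_ge0 `|L *: x - y|.

have k1 : 0 <= L * (L * (`|x| ^+ 2 + `|x'| ^+ 2) + 2 * ip x y) by nra.
have k2 : 0 <= L * (L * (`|x| ^+ 2 + `|x'| ^+ 2) - 2 * ip x y) by nra.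
rewrite pmulr_rge0 // in k1; rewrite pmulr_rge0 // in k2.
apply/andP; split; lra.
Qed.

Lemma step {R : realType} {V : normedModType R} {ip : V -> V -> R}
  (A : V -> set V) (B : V -> V) (m L lam : R) (u v w z a : V) :
  is_inner_product ip -> strongly_monotone ip m A -> monotone_fun ip B ->
  0 < L -> lipschitz_with L B -> 0 < lam ->
  A z (- B z) -> A u a -> v - 2 * lam *: B v + lam *: B w = u + lam *: a ->
  (1 + 2 * lam * m) * `|u - z| ^+ 2 - 2 * lam * ip (u - z) (B u - B v)
    + (1 - lam * L) * `|u - v| ^+ 2
  <= `|v - z| ^+ 2 - 2 * lam * ip (v - z) (B v - B w) + lam * L * `|v - w| ^+ 2.
Proof.
move=> H [m0 hsm] hB L0 hL lam0 hz hu he.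
have hs := hsm _ _ _ _ hu hz.
have hm := hB u z.
have /andP[hc1 hc2] := @cross_bound _ _ ip L (u - v) (v - w) (B v - B w) H L0 (hL v w).
have he' := congr1 (ip (u - z)) he.
have l0 : 0 <= lam by lra.
have hs' := ler_wpM2l l0 hs.
have hm' := mulr_ge0 l0 hm.
have hc' : 0 <= lam * (2 * ip (u - v) (B v - B w) + L * (`|u - v| ^+ 2 + `|v - w| ^+ 2)).
  apply: mulr_ge0 => //; lra.
move: hs' hm' hc' he'.
rewrite !(ip_norm H); do 3 rewrite ?(ipBl H) ?(ipBr H) ?(ipDl H) ?(ipDr H) ?(ipNl H) ?(ipNr H) ?(ipZl H) ?(ipZr H).
have s0 := (ip_sym H u v).
have s1 := (ip_sym H u w).
have s2 := (ip_sym H u z).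
have s3 := (ip_sym H u a).
have s4 := (ip_sym H u (B u)).
have s5 := (ip_sym H u (B v)).
have s6 := (ip_sym H u (B w)).
have s7 := (ip_sym H u (B z)).
have s8 := (ip_sym H v w).
have s9 := (ip_sym H v z).
have s10 := (ip_sym H v a).
have s11 := (ip_sym H v (B u)).
have s12 := (ip_sym H v (B v)).
have s13 := (ip_sym H v (B w)).
have s14 := (ip_sym H v (B z)).
have s15 := (ip_sym H w z).
have s16 := (ip_sym H w a).
have s17 := (ip_sym H w (B u)).
have s18 := (ip_sym H w (B v)).
have s19 := (ip_sym H w (B w)).
have s20 := (ip_sym H w (B z)).
have s21 := (ip_sym H z a).
have s22 := (ip_sym H z (B u)).
have s23 := (ip_sym H z (B v)).
have s24 := (ip_sym H z (B w)).
have s25 := (ip_sym H z (B z)).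
have s26 := (ip_sym H a (B u)).
have s27 := (ip_sym H a (B v)).
have s28 := (ip_sym H a (B w)).
have s29 := (ip_sym H a (B z)).
have s30 := (ip_sym H (B u) (B v)).
have s31 := (ip_sym H (B u) (B w)).
have s32 := (ip_sym H (B u) (B z)).
have s33 := (ip_sym H (B v) (B w)).
have s34 := (ip_sym H (B v) (B z)).
have s35 := (ip_sym H (B w) (B z)).
move=> *.
lra.
Qed.
Lemma lerXn_nneg {R : realType} (a b : R) (k : nat) :
  0 <= a -> a <= b -> a ^+ k <= b ^+ k.
Proof.
move=> a0 ab; elim: k => [|k IH]; first by rewrite !expr0.
rewrite !exprS; apply: ler_pM => //; exact: exprn_ge0.
Qed.

Theorem theorem2p9 (R : realType) (V : completeNormedModType R)
  (ip : V -> V -> R) (A : V -> set V) (B : V -> V) (m L lam : R)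
  (xm1 : V) (x : nat -> V) :
  is_inner_product ip ->
  maximally_monotone ip A ->
  strongly_monotone ip m A ->
  monotone_fun ip B ->
  0 < L -> lipschitz_with L B ->
  zeros_sum A B !=set0 ->
  0 < lam -> lam < 1 / (2 * L) ->
  resolvent lam A (x 0 - 2 * lam *: B (x 0) + lam *: B xm1) (x 1) ->
  (forall k, resolvent lam A (x k.+1 - 2 * lam *: B (x k.+1) + lam *: B (x k)) (x k.+2)) ->
  exists z, zeros_sum A B = [set z] /\ R_linear_conv x z.
Proof.
move=> H hA hSM hB L0 hL [z hz] lam0 lamL h1 hrec.
have [m0 hsm] := hSM.
have uniq : forall z', zeros_sum A B z' -> z' = z.
  move=> z' hz'.
  have hs := hsm _ _ _ _ hz' hz.
  have hm := hB z' z.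
  move: hs; rewrite !(ipBr H) !(ipNr H) => hs.
  have hn : `|z' - z| ^+ 2 <= 0.
    have : m * `|z' - z| ^+ 2 <= 0 by move: hm; rewrite (ipBr H); lra.
    by rewrite pmulr_rle0.
  have : `|z' - z| = 0 by have := normr_ge0 (z' - z); nra.
  by move/eqP; rewrite normr_eq0 subr_eq0 => /eqP.
exists z; split.
  apply/seteqP; split => w /=; first exact: uniq.
  by move=> ->.
pose y n := if n is k.+1 then x k else xm1.
have hy : forall k, resolvent lam A (y k.+1 - 2 * lam *: B (y k.+1) + lam *: B (y k)) (y k.+2).
  by case.
have tL : lam * L < 1 / 2.
  move: lamL; rewrite ltr_pdivlMr; last by lra.
  move=> h; rewrite ltr_pdivlMr; lra.
pose s := lam * m.
have s0 : 0 < s by apply: mulr_gt0.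
have t0 : 0 < lam * L by apply: mulr_gt0.
pose eps := Num.min s ((1 - 2 * (lam * L)) / 2).
have eps_s : eps <= s by rewrite ge_min lexx.
have eps_t : eps <= (1 - 2 * (lam * L)) / 2 by rewrite ge_min lexx orbT.
have eps0 : 0 < eps by rewrite lt_min s0 /=; lra.
pose c := 1 + eps.
pose E n := `|y n.+1 - z| ^+ 2 - 2 * lam * ip (y n.+1 - z) (B (y n.+1) - B (y n))
   + lam * L * `|y n.+1 - y n| ^+ 2.
have lowE : forall n, `|y n.+1 - z| ^+ 2 <= 2 * E n.
  move=> n; rewrite /E.
  have /andP[c1 c2] := @cross_bound _ _ ip L (y n.+1 - z) (y n.+1 - y n) _ H L0 (hL _ _).
  have := ler_wpM2l (ltW lam0) c2.
  have := sqr_ge0 `|y n.+1 - z|. have := sqr_ge0 `|y n.+1 - y n|.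
  nra.
have stepE : forall n, c * E n.+1 <= E n.
  move=> n.
  have [a [ha he]] := hy n.
  have hst := @step _ _ ip A B m L lam _ _ _ _ _ H hSM hB L0 hL lam0 hz ha he.
  rewrite /E /c.
  have /andP[c1 c2] := @cross_bound _ _ ip L (y n.+2 - z) (y n.+2 - y n.+1) _ H L0 (hL _ _).
  have k0 := ler_wpM2l (ltW lam0) c1.
  have k1 : 0 <= eps * (lam * (2 * ip (y n.+2 - z) (B (y n.+2) - B (y n.+1))) - lam * (- (L * (`|y n.+2 - z| ^+ 2 + `|y n.+2 - y n.+1| ^+ 2))))
    by apply: mulr_ge0; lra.
  have a0 := sqr_ge0 `|y n.+2 - z|. have d0 := sqr_ge0 `|y n.+2 - y n.+1|.
  have k2 : 0 <= (2 * s - eps - eps * (lam * L)) * `|y n.+2 - z| ^+ 2.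
    apply: mulr_ge0 => //.
    have : eps * (lam * L) <= s * (1/2) by apply: ler_pM; lra.
    lra.
  have k3 : 0 <= (1 - 2 * (lam * L) - 2 * eps * (lam * L)) * `|y n.+2 - y n.+1| ^+ 2.
    apply: mulr_ge0 => //.
    have : eps * (lam * L) <= (1 - 2 * (lam * L)) / 2 * (1/2) by apply: ler_pM; lra.
    lra.
  move: hst; rewrite /s in k2; nra.
have c1 : 1 < c by rewrite /c; lra.
pose r := c^-1.
have r0 : 0 < r by rewrite /r invr_gt0; lra.
have r1 : r < 1 by rewrite /r invf_lt1 //; lra.
have stepE' : forall n, E n.+1 <= r * E n.
  move=> n; rewrite /r -(ler_pM2l (_ : 0 < c)); last by lra.
  by rewrite mulrA mulfV ?mul1r ?stepE //; apply/eqP => h; rewrite h in c1; lra.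
have indE : forall n, E n <= E 0 * r ^+ n.
  elim=> [|n IH]; first by rewrite expr0 mulr1.
  have := ler_wpM2l (ltW r0) IH; have := stepE' n; rewrite exprS; lra.
have E00 : 0 <= E 0.
  have := lowE 0; have := sqr_ge0 `|y 1 - z|; lra.
pose D := 2 * E 0.
pose q := (1 + r) / 2.
exists (1 + D), q; split; first by rewrite /D; lra.
split; first by apply/andP; rewrite /q; split; lra.
move=> k.
have hk : `|x k - z| ^+ 2 <= D * r ^+ k.
  have := lowE k; have := indE k; have := exprn_ge0 k (ltW r0).
  rewrite /D /=; nra.
have rq : r ^+ k <= (q ^+ 2) ^+ k.
  apply: lerXn_nneg; first exact: ltW.
  rewrite /q; nra.
have q0 : 0 <= q ^+ k by apply: exprn_ge0; rewrite /q; lra.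
rewrite -(@ler_pXn2r _ 2) // ?nnegrE //; last first.
  apply: mulr_ge0 => //; rewrite /D; lra.
rewrite exprMn -exprM mulnC exprM.
have rk0 := exprn_ge0 k (ltW r0).
have : D * r ^+ k <= (1 + D) ^+ 2 * r ^+ k.
  apply: ler_wpM2r => //; rewrite /D; nra.
have : (1 + D) ^+ 2 * r ^+ k <= (1 + D) ^+ 2 * (q ^+ 2) ^+ k.
  apply: ler_wpM2l => //; exact: sqr_ge0.
lra.
Qed.
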